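(* Let $G=(N,T,F,P,S)$ be a grounded indexed grammar, $D$ a derivation tree of $G$ (with some set of marked positions of its yield), and $H=(v_0,\dots,v_m)$ a limited flat descent in $D$. Then $H$ has at most $|N|\cdot 3^{|N|}$ splits.
   Context: An indexed grammar $G=(N,T,F,P,S)$ has finite alphabets $N$ (nonterminals), $T$ (terminals), $F$ (stack symbols), start symbol $S$, and productions of the forms $A\to r$, $A\to Bf$, $Af\to r$ ($A,B\in N$, $f\in F$, $r\in(N\cup T)^*$); nonterminals carry stacks $x\in F^*$ (written $Ax$, top first); applying $A\to r$ to $Ax$ gives $r$ with each nonterminal $C$ replaced by $Cx$; $A\to Bf$ turns $Ax$ into $Bfx$; $Af\to r$ turns $Afy$ into $r$ with each nonterminal $C$ replaced by $Cy$. $G$ is grounded if there is $\$\in F$ such that all productions have the forms $S\to A\$$, $A\to r$, $A\to Bf$, $Af\to r$, $A\$\to s$ with $A,B\in N\setminus\{S\}$, $f\in F\setminus\{\$\}$, $r\in(N\setminus\{S\})^+$, $s\in T^*$. A derivation tree is an ordered tree with root labelled $S$ (empty stack), internal nodes labelled in $NF^*$, leaves labelled in $T^*$, where the children of each internal node are obtained from its label by one production (a production $A\$\to s'$ yields a single leaf labelled $s'$); its yield is the concatenation of leaf labels. Marking: a leaf is marked if its label contains a marked position of the yield; an internal node is marked if it has a marked descendant; a branch node is a node with more than one marked child. For an internal node $v$ labelled $Ax$: $\sigma(v)=A$, $\eta(v)=|x|$; $v'$ is in the scope of $v$ iff $v'$ is internal and there is a downward path from $v$ to $v'$ all of whose nodes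 $v''$ (including $v'$) satisfy $\eta(v'')\ge \eta(v)$; $\beta(v)$ is the set of nodes in the scope of $v$ none of whose children is in the scope of $v$; $\tau(v)=(\tau_1,\tau_2,\tau_3)$ with $\tau_1=\{A:\sigma(v')\ne A\ \forall v'\in\beta(v)\}$, $\tau_2=\{A:\exists v'\in\beta(v),\sigma(v')=A$, and no marked $v'\in\beta(v)$ has $\sigma(v')=A\}$, $\tau_3=\{A:\exists$ marked $v'\in\beta(v)$ with $\sigma(v')=A\}$. A descent is a list of internal nodes $(v_0,\dots,v_m)$, $m\ge0$, with $v_m\in\beta(v_0)$ and each $v_i$ ($i\ge1$) a (not necessarily immediate) descendant of $v_{i-1}$. For $0\le i<m$ there is a split between $i$ and $i+1$ iff some node on the tree path from $v_i$ (inclusive) to $v_{i+1}$ (exclusive) is a branch node (counted as one split regardless of how many branch nodes); the number of splits of $H$ is the number of such $i$. $H$ is flat if $\eta(v_i)=\eta(v_0)$ for all $i$. $H$ is limited iff for all $0\le b_1<t_1<t_2\le b_2\le m$ with $\sigma(v_{b_1})=\sigma(v_{t_1})$, $\sigma(v_{t_2})=\sigma(v_{b_2})$, $v_{b_2}\in\beta(v_{b_1})$, $v_{t_2}\in\beta(v_{t_1})$ and $\tau(v_{b_1})=\tau(v_{t_1})$, there is no split between $i$ and $i+1$ for any $b_1\le i<t_1$ or any $t_2\le i<b_2$. *)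

(* Defs.v *)
From Stdlib Require List.
From mathcomp Require Import all_boot.
Set Implicit Arguments.
Unset Strict Implicit.
Unset Printing Implicit Defensive.

Section IndexedGrammars.
Variables (N T F : Type).

(* Productions of a (general) indexed grammar:
     Rule A r    :  A -> r      (r in (N u T)^* )
     Push A B f  :  A -> B f
     Pop A f r   :  A f -> r    (r in (N u T)^* )                         *)
Inductive production :=
| Rule of N & seq (N + T)
| Push of N & N & F
| Pop  of N & F & seq (N + T).

Definition is_nt (c : N + T) : bool := if c is inl _ then true else false.
Definition is_t  (c : N + T) : bool := if c is inr _ then true else false.

Definition grounded (S : N) (dol : F) (P : seq production) : Prop :=
  forall p, List.In p P ->
  match p with
  | Push A B f =>
      (A = S /\ f = dol /\ B <> S)
   \/ (A <> S /\ B <> S /\ f <> dol)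
  | Rule A r =>
      A <> S /\ r <> [::] /\
      forall c, List.In c r -> exists C, c = inl C /\ C <> S
  | Pop A f r =>
      A <> S /\
      ((f <> dol /\ r <> [::] /\
         forall c, List.In c r -> exists C, c = inl C /\ C <> S)
       \/ (f = dol /\ forall c, List.In c r -> is_t c))
  end.

(* Derivation trees: internal nodes labelled A x (x in F^*, top first),
   leaves labelled by words in T^*. *)
Inductive tree :=
| Leaf of seq T
| Node of N & seq F & seq tree.

Definition rootlab (t : tree) : (N * seq F) + seq T :=
  match t with Leaf s => inr s | Node A x _ => inl (A, x) end.

(* A right-hand side consisting only of
   terminals (the productions A $ -> s of a grounded grammar) yields a single
   leaf labelled by that terminal word. *)
Definition expand (r : seq (N + T)) (y : seq F) : seq ((N * seq F) + seq T) :=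
  if all is_t r then
    [:: inr (pmap (fun c => if c is inr a then Some a else None) r)]
  else map (fun c => match c with inl C => inl (C, y) | inr a => inr [:: a] end) r.

Definition applies (p : production) (A : N) (x : seq F)
    (ls : seq ((N * seq F) + seq T)) : Prop :=
  match p with
  | Rule A' r => A' = A /\ ls = expand r x
  | Push A' B f => A' = A /\ ls = [:: inl (B, f :: x)]
  | Pop A' f r => A' = A /\ exists y, x = f :: y /\ ls = expand r y
  end.

(* nodes are addressed by sequences of child indices (0-based) *)
Fixpoint sub (t : tree) (v : seq nat) {struct v} : option tree :=
  match v with
  | [::] => Some t
  | i :: q =>
      match t with
      | Leaf _ => None
      | Node _ _ ts => if i < size ts then sub (nth (Leaf [::]) ts i) q else None
      end
  end.

Definition derivation_tree (S : N) (P : seq production) (t : tree) : Prop :=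
  (exists ts, t = Node S [::] ts) /\
  forall v A x ts, sub t v = Some (Node A x ts) ->
    exists p, List.In p P /\ applies p A x (map rootlab ts).

Definition is_node (t : tree) (v : seq nat) : Prop := exists u, sub t v = Some u.
Definition internal (t : tree) (v : seq nat) : Prop :=
  exists A x ts, sub t v = Some (Node A x ts).

(* sigma and eta (meaningful on internal nodes) *)
Definition sigma (t : tree) (v : seq nat) : option N :=
  match sub t v with Some (Node A _ _) => Some A | _ => None end.
Definition eta (t : tree) (v : seq nat) : nat :=
  match sub t v with Some (Node _ x _) => size x | _ => 0 end.

Definition desc_eq (v w : seq nat) : Prop := exists q, w = v ++ q.
Definition desc (v w : seq nat) : Prop := exists q, q <> [::] /\ w = v ++ q.

Definition child (t : tree) (v c : seq nat) : Prop :=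
  is_node t c /\ exists i, c = rcons v i.

Fixpoint ylen (t : tree) : nat :=
  match t with
  | Leaf s => size s
  | Node _ _ ts => sumn (map ylen ts)
  end.

Fixpoint offset (t : tree) (v : seq nat) {struct v} : nat :=
  match v with
  | [::] => 0
  | i :: q =>
      match t with
      | Leaf _ => 0
      | Node _ _ ts => sumn (map ylen (take i ts)) + offset (nth (Leaf [::]) ts i) q
      end
  end.

(* marking; M is the set of marked positions (0-based) of the yield *)
Definition marked_leaf (t : tree) (M : pred nat) (u : seq nat) : Prop :=
  exists s, sub t u = Some (Leaf s) /\
    exists k, k < size s /\ M (offset t u + k).

Definition marked (t : tree) (M : pred nat) (w : seq nat) : Prop :=
  marked_leaf t M w \/ (internal t w /\ exists u, desc w u /\ marked_leaf t M u).

Definition branch (t : tree) (M : pred nat) (w : seq nat) : Prop :=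
  exists c1 c2, c1 <> c2 /\ child t w c1 /\ child t w c2 /\
    marked t M c1 /\ marked t M c2.

Definition in_scope (t : tree) (v v' : seq nat) : Prop :=
  internal t v' /\ desc_eq v v' /\
  forall w, desc_eq v w -> desc_eq w v' -> eta t v <= eta t w.

Definition in_beta (t : tree) (v v' : seq nat) : Prop :=
  in_scope t v v' /\ forall c, child t v' c -> ~ in_scope t v c.

Definition tau1 (t : tree) (v : seq nat) (A : N) : Prop :=
  forall v', in_beta t v v' -> sigma t v' <> Some A.
Definition tau2 (t : tree) (M : pred nat) (v : seq nat) (A : N) : Prop :=
  (exists v', in_beta t v v' /\ sigma t v' = Some A) /\
  ~ (exists v', in_beta t v v' /\ marked t M v' /\ sigma t v' = Some A).
Definition tau3 (t : tree) (M : pred nat) (v : seq nat) (A : N) : Prop :=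
  exists v', in_beta t v v' /\ marked t M v' /\ sigma t v' = Some A.

Definition tau_eq (t : tree) (M : pred nat) (v w : seq nat) : Prop :=
  forall A, (tau1 t v A <-> tau1 t w A) /\ (tau2 t M v A <-> tau2 t M w A) /\
            (tau3 t M v A <-> tau3 t M w A).

(* descents H = (v_0, ..., v_m) given as a nonempty list, v_i = nth [::] H i,
   m = (size H).-1 *)
Definition vtx (H : seq (seq nat)) (i : nat) : seq nat := nth [::] H i.
Definition lastidx (H : seq (seq nat)) : nat := (size H).-1.

Definition descent (t : tree) (H : seq (seq nat)) : Prop :=
  0 < size H /\
  (forall i, i <= lastidx H -> internal t (vtx H i)) /\
  in_beta t (vtx H 0) (vtx H (lastidx H)) /\
  (forall i, 1 <= i <= lastidx H -> desc (vtx H i.-1) (vtx H i)).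

Definition split_at (t : tree) (M : pred nat) (H : seq (seq nat)) (i : nat) : Prop :=
  exists w, desc_eq (vtx H i) w /\ desc w (vtx H i.+1) /\ branch t M w.

Definition at_most_splits (t : tree) (M : pred nat) (H : seq (seq nat)) (K : nat) : Prop :=
  forall s : seq nat, uniq s ->
    (forall i, i \in s -> i < lastidx H /\ split_at t M H i) -> size s <= K.

Definition flat (t : tree) (H : seq (seq nat)) : Prop :=
  forall i, i <= lastidx H -> eta t (vtx H i) = eta t (vtx H 0).

Definition limited (t : tree) (M : pred nat) (H : seq (seq nat)) : Prop :=
  forall b1 t1 t2 b2, b1 < t1 -> t1 < t2 -> t2 <= b2 -> b2 <= lastidx H ->
    sigma t (vtx H b1) = sigma t (vtx H t1) ->
    sigma t (vtx H t2) = sigma t (vtx H b2) ->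
    in_beta t (vtx H b1) (vtx H b2) ->
    in_beta t (vtx H t1) (vtx H t2) ->
    tau_eq t M (vtx H b1) (vtx H t1) ->
    (forall i, b1 <= i < t1 -> ~ split_at t M H i) /\
    (forall i, t2 <= i < b2 -> ~ split_at t M H i).

End IndexedGrammars.

(* Main.v *)
Require Import Defs.
From mathcomp Require Import all_boot.
From Stdlib Require Import ClassicalDescription.

Section Aux.
Variables (N T F : finType).
Implicit Types (t : tree N T F).

Definition emi := excluded_middle_informative.

Definition code t (M : pred nat) (v : seq nat) (A : N) : option bool :=
  if emi (tau3 t M v A) then Some true
  else if emi (tau2 t M v A) then Some false else None.

Lemma tau3_not1 t M v A : tau3 t M v A -> ~ tau1 t v A.
Proof. by move=> [v' [hb [_ hs]]] h1; apply: (h1 v' hb hs). Qed.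

Lemma tau2_not1 t M v A : tau2 t M v A -> ~ tau1 t v A.
Proof. by move=> [[v' [hb hs]] _] h1; apply: (h1 v' hb hs). Qed.

Lemma tau3_not2 t M v A : tau3 t M v A -> ~ tau2 t M v A.
Proof. by move=> h3 [_ h]. Qed.

Lemma not23_1 t M v A : ~ tau3 t M v A -> ~ tau2 t M v A -> tau1 t v A.
Proof. move=> n3 n2 v' hb hs; apply: n2; split; [by exists v' | exact: n3]. Qed.

Arguments tau3_not1 {t M v A}.
Arguments tau2_not1 {t M v A}.
Arguments tau3_not2 {t M v A}.
Arguments not23_1 {t M v A}.

Lemma code_eq t M v w A : code t M v A = code t M w A ->
  (tau1 t v A <-> tau1 t w A) /\ (tau2 t M v A <-> tau2 t M w A) /\
  (tau3 t M v A <-> tau3 t M w A).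
Proof.
rewrite /code.
case: (emi (tau3 t M v A)) => a3; case: (emi (tau2 t M v A)) => a2;
case: (emi (tau3 t M w A)) => b3; case: (emi (tau2 t M w A)) => b2 //= _;
(split; [split|split; split]); move=> h; try done;
repeat match goal with
| h3 : tau3 _ _ _ _, h1 : tau1 _ _ _ |- _ => case: (tau3_not1 h3 h1)
| h3 : tau3 _ _ _ _, h2 : tau2 _ _ _ _ |- _ => case: (tau3_not2 h3 h2)
| h2 : tau2 _ _ _ _, h1 : tau1 _ _ _ |- _ => case: (tau2_not1 h2 h1)
| n3 : ~ tau3 ?t ?M ?v ?A, n2 : ~ tau2 ?t ?M ?v ?A |- tau1 ?t ?v ?A => exact: (not23_1 n3 n2)
end.
Qed.

Lemma desc_eq_trans (a b c : seq nat) : desc_eq a b -> desc_eq b c -> desc_eq a c.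
Proof. move=> [q1 ->] [q2 ->]; exists (q1 ++ q2); by rewrite catA. Qed.

Lemma prefix_cmp (w v q q' : seq nat) : w ++ q = v ++ q' -> desc_eq w v \/ desc_eq v w.
Proof.
elim: w v => [|a w IH] [|b v] /=.
- by left; exists [::].
- by left; exists (b :: v).
- by right; exists (a :: w).
- case=> -> /IH [[r ->]|[r ->]]; [left|right]; by exists r.
Qed.

End Aux.

Theorem lemma3 (N T F : finType) (S : N) (dol : F) (P : seq (production N T F))
    (hG : grounded S dol P)
    (D : tree N T F) (hD : derivation_tree S P D)
    (M : pred nat) (H : seq (seq nat))
    (hH : descent D H) (hflat : flat D H) (hlim : limited D M H) :
  at_most_splits D M H (#|N| * 3 ^ #|N|).
Proof.
case: hH => [_ [hint [hb0 hdesc]]].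
set m := lastidx H.
have chain : forall i j, i <= j -> j <= m -> desc_eq (vtx H i) (vtx H j).
  move=> i j; elim: j => [|j IH] hij hjm.
    by move: hij; rewrite leqn0 => /eqP ->; exists [::]; rewrite cats0.
  case: (ltngtP i j.+1) hij => // [hlt|->] _; last by exists [::]; rewrite cats0.
  apply: desc_eq_trans (IH hlt (ltnW hjm)) _.
  have [q [_ e]] := hdesc j.+1 hjm; exists q; exact: e.
have beta : forall i, i <= m -> in_beta D (vtx H i) (vtx H m).
  move=> i him; case: hb0 => [[hintm [hd0m hsc0]] hnc0].
  split.
    split=> //; split; first exact: chain.
    move=> w hiw hwm; rewrite hflat //; apply: hsc0 => //.
    exact: desc_eq_trans (chain 0 i isT him) hiw.
  move=> c hc [hic [hdc hw]]; apply: (hnc0 c hc); split=> //; split.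
    exact: desc_eq_trans (chain 0 i isT him) hdc.
  move=> w h0w hwc.
  case: hdc => q e0; case: hwc => q' e1.
  have [hwi|hiw] : desc_eq w (vtx H i) \/ desc_eq (vtx H i) w.
    by apply: (@prefix_cmp w (vtx H i) q' q); rewrite -e1; exact: e0.
  - apply: hsc0 => //; exact: desc_eq_trans hwi (chain i m him (leqnn m)).
  - rewrite -(hflat i him); apply: hw => //; by exists q'.
move=> s us hs.
pose sg v := if sigma D v is Some A then A else S.
have sgE : forall v, internal D v -> sigma D v = Some (sg v).
  by move=> v [A [x [ts e]]]; rewrite /sg /sigma e.
pose f i := (sg (vtx H i), ([ffun A : N => @code N T F D M (vtx H i) A] : {ffun N -> option bool})).
have claim : forall i j, i \in s -> j \in s -> i < j -> f i = f j -> False.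
  move=> i j hi hj hij [e1 e2].
  have [hi1 spi] := hs i hi; have [hj1 spj] := hs j hj.
  have hjm : j <= m := ltnW hj1.
  have him : i <= m := ltnW (ltn_trans hij hj1).
  have ec : forall A, @code N T F D M (vtx H i) A = @code N T F D M (vtx H j) A.
    by move=> A; have := congr1 (fun g : {ffun N -> option bool} => g A) e2; rewrite !ffunE.
  have [H1 _] := hlim i j m m hij hj1 (leqnn _) (leqnn _)
    (etrans (sgE _ (hint _ him)) (etrans (congr1 Some e1) (esym (sgE _ (hint _ hjm))))) erefl
    (beta i him) (beta j hjm)
    (fun A => @code_eq N T F D M _ _ A (ec A)).
  by apply: (H1 i) => //; rewrite leqnn hij.
have inj : {in s &, injective f}.
  move=> i j hi hj e; case: (ltngtP i j) => // hij.
  - by case: (claim i j hi hj hij e).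
  - by case: (claim j i hj hi hij (esym e)).
have : uniq (map f s) by rewrite map_inj_in_uniq.
move/card_uniqP; rewrite size_map => <-.
apply: leq_trans (max_card _) _.
by rewrite card_prod card_ffun card_option card_bool.
Qed.
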